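(* Let $(M,\rho)$ be a complete metric space and let $f,g:M\to\mathbb{R}$ be Lipschitz functions such that $f$ is bounded below and $$|\widetilde\nabla f|(x)\ge|\widetilde\nabla g|(x)\qquad\text{for all } x\in M.$$ Then $$\inf_M(f-g)=\inf_{\varepsilon\operatorname{Crit} f}(f-g)\qquad\text{for every }\varepsilon>0.$$
   Context: $[t]^+:=\max\{0,t\}$. The global slope is $|\widetilde\nabla f|(x):=\sup_{y\neq x}\frac{[f(x)-f(y)]^+}{\rho(x,y)}\in[0,+\infty]$. For $\varepsilon\ge0$, $\varepsilon\operatorname{Crit} f:=\{x:\ |\widetilde\nabla f|(x)\le\varepsilon\}=\{x:\ f(y)\ge f(x)-\varepsilon\rho(y,x)\ \forall y\in M\}$. *)

(* Defs.v *)
From Stdlib Require Import Reals.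
From Coquelicot Require Import Coquelicot.
Open Scope R_scope.

Definition is_metric {M : Type} (rho : M -> M -> R) : Prop :=
  (forall x y, 0 <= rho x y) /\
  (forall x y, rho x y = 0 <-> x = y) /\
  (forall x y, rho x y = rho y x) /\
  (forall x y z, rho x z <= rho x y + rho y z).

Definition cauchy_seq {M : Type} (rho : M -> M -> R) (u : nat -> M) : Prop :=
  forall eps, 0 < eps -> exists N : nat, forall n m : nat,
    (N <= n)%nat -> (N <= m)%nat -> rho (u n) (u m) < eps.

Definition converges_to {M : Type} (rho : M -> M -> R) (u : nat -> M) (x : M) : Prop :=
  forall eps, 0 < eps -> exists N : nat, forall n : nat,
    (N <= n)%nat -> rho (u n) x < eps.

Definition complete_metric {M : Type} (rho : M -> M -> R) : Prop :=
  is_metric rho /\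
  forall u : nat -> M, cauchy_seq rho u -> exists x, converges_to rho u x.

Definition lipschitz {M : Type} (rho : M -> M -> R) (f : M -> R) : Prop :=
  exists L : R, forall x y, Rabs (f x - f y) <= L * rho x y.

Definition bounded_below {M : Type} (f : M -> R) : Prop :=
  exists m : R, forall x, m <= f x.

(* global slope |~nabla f|(x) = sup_{y <> x} [f x - f y]^+ / rho x y  in [0,+oo]
   (0 is included so that the supremum over an empty index set is 0; this
   does not change the value otherwise since all quotients are >= 0). *)
Definition global_slope {M : Type} (rho : M -> M -> R) (f : M -> R) (x : M) : Rbar :=
  Lub_Rbar (fun r => r = 0 \/
    exists y, y <> x /\ r = Rmax 0 (f x - f y) / rho x y).

Definition eps_crit {M : Type} (rho : M -> M -> R) (f : M -> R) (eps : R) (x : M) : Prop :=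
  Rbar_le (global_slope rho f x) (Finite eps).

(* infimum of h over the set A, in [-oo,+oo] (inf of the empty set is +oo) *)
Definition inf_over {M : Type} (A : M -> Prop) (h : M -> R) : Rbar :=
  Glb_Rbar (fun r => exists x, A x /\ r = h x).

(* Main.v *)
Require Import Defs.
From Stdlib Require Import Reals.
From Coquelicot Require Import Coquelicot.
From Stdlib Require Import Lra Lia Classical ClassicalEpsilon.
Open Scope R_scope.

Definition relE {M : Type} (rho : M -> M -> R) (F G : M -> R) (a : R) (y x : M) : Prop :=
  F y + a * rho x y <= F x /\ G y <= G x.

Lemma rel_refl {M : Type} (rho : M -> M -> R) F G a x :
  is_metric rho -> relE rho F G a x x.
Proof.
  intros [Hp [He [Hs Ht]]]. assert (rho x x = 0) by (apply He; reflexivity).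
  unfold relE. rewrite H. lra.
Qed.

Lemma rel_trans {M : Type} (rho : M -> M -> R) F G a x y z :
  is_metric rho -> 0 <= a -> relE rho F G a y x -> relE rho F G a z y -> relE rho F G a z x.
Proof.
  intros [Hp [He [Hs Ht]]] Ha [H1 H2] [H3 H4]. split; [|lra].
  assert (a * rho x z <= a * (rho x y + rho y z)) by (apply Rmult_le_compat_l; auto).
  lra.
Qed.

Lemma conv_lip {M : Type} (rho : M -> M -> R) F u xs :
  is_metric rho -> lipschitz rho F -> converges_to rho u xs ->
  forall e, 0 < e -> exists N, forall n, (N <= n)%nat -> F xs <= F (u n) + e.
Proof.
  intros [Hp [He [Hs Ht]]] [L HL] Hc e He0.
  assert (HL1 : 0 < Rabs L + 1) by (pose proof (Rabs_pos L); lra).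
  destruct (Hc (e / (Rabs L + 1))) as [N HN].
  { apply Rdiv_lt_0_compat; lra. }
  exists N. intros n Hn. specialize (HN n Hn).
  pose proof (HL xs (u n)) as H1. rewrite Hs in H1.
  pose proof (Hp (u n) xs).
  assert (L * rho (u n) xs <= (Rabs L + 1) * rho (u n) xs).
  { apply Rmult_le_compat_r; auto. pose proof (Rle_abs L); lra. }
  assert ((Rabs L + 1) * rho (u n) xs <= (Rabs L + 1) * (e / (Rabs L + 1))).
  { apply Rmult_le_compat_l; lra. }
  assert ((Rabs L + 1) * (e / (Rabs L + 1)) = e) by (field; lra).
  pose proof (Rle_abs (F xs - F (u n))). lra.
Qed.

Lemma rel_closed {M : Type} (rho : M -> M -> R) F G a u xs x N :
  is_metric rho -> 0 <= a -> lipschitz rho F -> lipschitz rho G ->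
  converges_to rho u xs ->
  (forall n, (N <= n)%nat -> relE rho F G a (u n) x) -> relE rho F G a xs x.
Proof.
  intros Hm Ha HF HG Hc Hr. pose proof Hm as [Hp [He [Hs Ht]]]. split.
  - apply Rle_plus_epsilon. intros e He0.
    destruct (conv_lip rho F u xs Hm HF Hc (e/3)) as [N1 H1]; [lra|].
    destruct (Hc (e / (3 * (a + 1)))) as [N2 H2].
    { apply Rdiv_lt_0_compat; lra. }
    set (n := (N + N1 + N2)%nat).
    specialize (H1 n ltac:(unfold n; lia)). specialize (H2 n ltac:(unfold n; lia)).
    destruct (Hr n ltac:(unfold n; lia)) as [Hr1 _].
    assert (a * rho x xs <= a * (rho x (u n) + rho (u n) xs)) by (apply Rmult_le_compat_l; auto).
    assert (a * rho (u n) xs <= e / 3).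
    { apply Rle_trans with ((a+1) * rho (u n) xs).
      - pose proof (Hp (u n) xs). nra.
      - apply Rle_trans with ((a+1) * (e / (3 * (a + 1)))).
        + apply Rmult_le_compat_l; lra.
        + right; field; lra. }
    lra.
  - apply Rle_plus_epsilon. intros e He0.
    destruct (conv_lip rho G u xs Hm HG Hc e He0) as [N1 H1].
    specialize (H1 (N + N1)%nat ltac:(lia)).
    destruct (Hr (N + N1)%nat ltac:(lia)) as [_ Hr2]. lra.
Qed.

Lemma step_ex {M : Type} (rho : M -> M -> R) F G a :
  is_metric rho -> (exists m, forall x, m <= F x) -> 0 <= a ->
  forall x e, 0 < e -> exists y, relE rho F G a y x /\
     forall y', relE rho F G a y' x -> F y <= F y' + e.
Proof.
  intros Hm [m Hmm] Ha x e He. apply NNPP. intro H.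
  assert (Hd : forall y, relE rho F G a y x -> exists y', relE rho F G a y' x /\ F y' < F y - e).
  { intros y Hy. apply NNPP; intro H2. apply H. exists y; split; auto.
    intros y' Hy'. destruct (Rle_lt_dec (F y) (F y' + e)); auto.
    exfalso; apply H2; exists y'; split; auto; lra. }
  assert (Hk : forall k, exists y, relE rho F G a y x /\ F y <= F x - INR k * e).
  { induction k.
    - exists x; split; [apply rel_refl; auto|]. simpl; lra.
    - destruct IHk as [y [Hy Hy2]]. destruct (Hd y Hy) as [y' [Hy' Hy'2]].
      exists y'; split; auto. rewrite S_INR. lra. }
  destruct (INR_unbounded ((F x - m) / e)) as [k Hk1].
  destruct (Hk k) as [y [_ Hy]].
  assert (INR k * e > (F x - m) / e * e) by (apply Rmult_gt_compat_r; auto).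
  assert ((F x - m) / e * e = F x - m) by (field; lra).
  specialize (Hmm y). lra.
Qed.

Lemma seq_choice {M : Type} (P : nat -> M -> M -> Prop) (x0 : M) :
  (forall n x, exists y, P n x y) ->
  exists u : nat -> M, u 0%nat = x0 /\ forall n, P n (u n) (u (S n)).
Proof.
  intros H.
  set (st := fun n x => proj1_sig (constructive_indefinite_description _ (H n x))).
  exists (fix u n := match n with O => x0 | S k => st k (u k) end).
  split; [reflexivity|]. intro n. simpl. unfold st.
  exact (proj2_sig (constructive_indefinite_description _ (H n _))).
Qed.

Lemma half_small (y : R) : 0 < y -> exists N, forall n, (N <= n)%nat -> (/2)^n < y.
Proof.
  intros Hy. destruct (pow_lt_1_zero (/2)) with (y := y) as [N HN]; auto.
  { rewrite Rabs_pos_eq; lra. }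
  exists N. intros n Hn. specialize (HN n Hn). pose proof (Rle_abs ((/2)^n)). lra.
Qed.

Lemma ekeland {M : Type} (rho : M -> M -> R) F G a x0 :
  complete_metric rho -> lipschitz rho F -> lipschitz rho G ->
  (exists m, forall x, m <= F x) -> 0 < a ->
  exists y, relE rho F G a y x0 /\ forall z, relE rho F G a z y -> z = y.
Proof.
  intros [Hm Hcomp] HF HG Hb Ha. pose proof Hm as [Hp [He [Hs Ht]]].
  destruct (seq_choice (fun n x y => relE rho F G a y x /\
     forall y', relE rho F G a y' x -> F y <= F y' + (/2)^n) x0) as [u [Hu0 Hu]].
  { intros n x. apply step_ex; auto; try lra. apply pow_lt; lra. }
  assert (Hmono : forall n k, relE rho F G a (u (k + n)%nat) (u n)).
  { intros n k; induction k.
    - apply rel_refl; auto.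
    - apply rel_trans with (u (k + n)%nat); auto; try lra.
      simpl. apply Hu. }
  assert (Hmono' : forall n m, (n <= m)%nat -> relE rho F G a (u m) (u n)).
  { intros n m Hnm. replace m with ((m - n) + n)%nat by lia. apply Hmono. }
  assert (Hcl : forall n z, relE rho F G a z (u (S n)) -> a * rho (u (S n)) z <= (/2)^n).
  { intros n z Hz. destruct (Hu n) as [H3 H2].
    assert (relE rho F G a z (u n)) by (apply rel_trans with (u (S n)); auto; lra).
    specialize (H2 z H). destruct Hz. lra. }
  assert (Hdiv : forall p q e, 0 <= p -> a * p <= q -> q < a * e -> p < e).
  { intros p q e Hp0 H1 H2. apply (Rmult_lt_reg_l a); lra. }
  assert (Hcau : cauchy_seq rho u).
  { intros e He0. destruct (half_small (a * (e/2))) as [N HN].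
    { apply Rmult_lt_0_compat; lra. }
    exists (S N). intros n m Hn Hm'.
    assert (Ha1 : rho (u (S N)) (u n) < e/2).
    { apply Hdiv with ((/2)^N); [apply Hp | apply Hcl; apply Hmono'; lia | apply HN; lia]. }
    assert (Ha2 : rho (u (S N)) (u m) < e/2).
    { apply Hdiv with ((/2)^N); [apply Hp | apply Hcl; apply Hmono'; lia | apply HN; lia]. }
    pose proof (Ht (u n) (u (S N)) (u m)) as Ht1. rewrite (Hs (u n) (u (S N))) in Ht1. lra. }
  destruct (Hcomp u Hcau) as [xs Hxs].
  assert (Hrx : forall n, relE rho F G a xs (u n)).
  { intro n. apply rel_closed with u n; auto; lra. }
  exists xs. split.
  { rewrite <- Hu0. apply Hrx. }
  intros z Hz. apply He. apply Rle_antisym; [|apply Hp].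
  apply Rle_plus_epsilon. intros e He0.
  destruct (half_small (a * (e/2))) as [N1 HN1].
  { apply Rmult_lt_0_compat; lra. }
  destruct (Hxs (e/2)) as [N2 HN2]; [lra|].
  set (n := (N1 + N2)%nat).
  assert (Hz1 : rho (u (S n)) z < e/2).
  { apply Hdiv with ((/2)^n); [apply Hp | apply Hcl | apply HN1; unfold n; lia].
    apply rel_trans with xs; auto; lra. }
  specialize (HN2 (S n) ltac:(unfold n; lia)).
  pose proof (Ht z (u (S n)) xs) as Ht1. rewrite (Hs z (u (S n))) in Ht1. lra.
Qed.

Lemma key {M : Type} (rho : M -> M -> R) (f g : M -> R) :
  complete_metric rho ->
  lipschitz rho f -> lipschitz rho g ->
  bounded_below f ->
  (forall x, Rbar_le (global_slope rho g x) (global_slope rho f x)) ->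
  forall eps : R, 0 < eps -> forall x0 d, 0 < d ->
  exists y, eps_crit rho f eps y /\ f y - g y <= f x0 - g x0 + d.
Proof.
  intros Hc Hlf Hlg [m Hm] Hsl eps Heps x0 d Hd.
  pose proof Hc as [[Hp [He [Hs Ht]]] _].
  set (D := f x0 - m).
  assert (HD : 0 <= D) by (unfold D; specialize (Hm x0); lra).
  set (c := d / (D + 1)).
  assert (Hc0 : 0 < c) by (apply Rdiv_lt_0_compat; lra).
  assert (HcD : c * D <= d).
  { apply Rle_trans with (c * (D + 1)). apply Rmult_le_compat_l; lra.
    right. unfold c. field. lra. }
  destruct Hlf as [Lf HLf]. destruct Hlg as [Lg HLg].
  set (G := fun x => (1 + c) * f x - g x).
  assert (HG : lipschitz rho G).
  { exists ((1 + c) * Lf + Lg). intros x y. unfold G.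
    replace ((1 + c) * f x - g x - ((1 + c) * f y - g y))
      with ((1 + c) * (f x - f y) + - (g x - g y)) by ring.
    eapply Rle_trans; [apply Rabs_triang|].
    rewrite Rabs_Ropp, Rabs_mult, (Rabs_pos_eq (1 + c)) by lra.
    assert ((1 + c) * Rabs (f x - f y) <= (1 + c) * (Lf * rho x y))
      by (apply Rmult_le_compat_l; [lra | apply HLf]).
    specialize (HLg x y). lra. }
  destruct (ekeland rho f G eps x0 Hc (ex_intro _ Lf HLf) HG (ex_intro _ m Hm) Heps)
    as [y [[Hr1 Hr2] Hmin]].
  exists y. split.
  2:{ unfold G in Hr2.
      assert (c * (f x0 - f y) <= c * D).
      { apply Rmult_le_compat_l; [lra|]. unfold D. specialize (Hm y). lra. }
      lra. }
  unfold eps_crit. apply NNPP. intro Hnot.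
  assert (Hlubf := Lub_Rbar_correct (fun r => r = 0 \/
    exists z, z <> y /\ r = Rmax 0 (f y - f z) / rho y z)).
  assert (Hlubg := Lub_Rbar_correct (fun r => r = 0 \/
    exists z, z <> y /\ r = Rmax 0 (g y - g z) / rho y z)).
  pose proof (Hsl y) as Hsly. unfold global_slope in Hnot, Hsly.
  assert (Hpos : forall z, z <> y -> 0 < rho y z).
  { intros z Hz. destruct (Hp y z) as [H|H]; auto. exfalso. apply Hz.
    symmetry. apply He. auto. }
  assert (Hub : Rbar_le (Lub_Rbar (fun r => r = 0 \/
    exists z, z <> y /\ r = Rmax 0 (f y - f z) / rho y z)) (Finite (Rabs Lf))).
  { apply Hlubf. intros r [Hr | [z [Hz Hr]]].
    - subst. simpl. apply Rabs_pos.
    - subst. simpl. apply Rle_div_l. apply Hpos; auto.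
      apply Rmax_lub. pose proof (Rabs_pos Lf). pose proof (Hp y z). nra.
      pose proof (Rle_abs (f y - f z)). pose proof (HLf y z).
      assert (Lf * rho y z <= Rabs Lf * rho y z)
        by (apply Rmult_le_compat_r; [apply Hp | apply Rle_abs]).
      lra. }
  set (Sf := Lub_Rbar _) in *. set (Sg := Lub_Rbar _) in *.
  clearbody Sf Sg.
  destruct Sf as [s| |]; simpl in Hub, Hnot; try tauto.
  apply Rnot_le_lt in Hnot.
  set (t := Rmax eps (s / (1 + c))).
  assert (Hts : t < s).
  { apply Rmax_lub_lt; auto. apply Rlt_div_l; [lra|]. nra. }
  destruct Hlubf as [_ Hlf2].
  assert (Hnub : ~ is_ub_Rbar (fun r => r = 0 \/
    exists z, z <> y /\ r = Rmax 0 (f y - f z) / rho y z) (Finite t)).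
  { intro H. specialize (Hlf2 _ H). simpl in Hlf2. lra. }
  unfold is_ub_Rbar in Hnub. apply not_all_ex_not in Hnub as [r Hr].
  apply imply_to_and in Hr as [HEr Hrt]. simpl in Hrt. apply Rnot_le_lt in Hrt.
  assert (Het : eps <= t) by apply Rmax_l.
  assert (Hst : s / (1 + c) <= t) by apply Rmax_r.
  destruct HEr as [Hr0 | [z [Hz Hr]]]; [lra|].
  pose proof (Hpos z Hz) as Hrho.
  assert (Hrm : Rmax 0 (f y - f z) = r * rho y z) by (rewrite Hr; field; lra).
  assert (Hfz : f y - f z = r * rho y z).
  { rewrite <- Hrm. unfold Rmax in Hrm |- *. destruct (Rle_dec 0 (f y - f z)); auto.
    exfalso. assert (0 < r * rho y z) by (apply Rmult_lt_0_compat; lra). lra. }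
  assert (Hgz : g y - g z <= s * rho y z).
  { destruct Hlubg as [Hg1 _].
    specialize (Hg1 (Rmax 0 (g y - g z) / rho y z) (or_intror (ex_intro _ z (conj Hz eq_refl)))).
    assert (Hg2 := Rbar_le_trans _ _ _ Hg1 Hsly). simpl in Hg2.
    apply Rle_div_l in Hg2; auto. pose proof (Rmax_r 0 (g y - g z)). lra. }
  assert (Hsr : s <= (1 + c) * r).
  { replace s with ((1 + c) * (s / (1 + c))) by (field; lra).
    apply Rmult_le_compat_l; lra. }
  assert (Hrel : relE rho f G eps z y).
  { split.
    - rewrite (Hs y z) in *. assert (eps * rho z y <= r * rho z y)
        by (apply Rmult_le_compat_r; lra). lra.
    - unfold G. assert (s * rho y z <= (1 + c) * r * rho y z)
        by (apply Rmult_le_compat_r; lra). nra. }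
  apply Hz. apply Hmin. exact Hrel.
Qed.

Theorem proposition3p2 (M : Type) (rho : M -> M -> R) (f g : M -> R) :
  complete_metric rho ->
  lipschitz rho f -> lipschitz rho g ->
  bounded_below f ->
  (forall x, Rbar_le (global_slope rho g x) (global_slope rho f x)) ->
  forall eps : R, 0 < eps ->
    inf_over (fun _ => True) (fun x => f x - g x)
    = inf_over (eps_crit rho f eps) (fun x => f x - g x).
Proof.
  intros Hc Hlf Hlg Hb Hsl eps Heps.
  pose proof (key rho f g Hc Hlf Hlg Hb Hsl eps Heps) as K.
  unfold inf_over.
  pose proof (Glb_Rbar_correct (fun r => exists x, True /\ r = f x - g x)) as [A1 A2].
  pose proof (Glb_Rbar_correct (fun r => exists x, eps_crit rho f eps x /\ r = f x - g x)) as [B1 B2].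
  apply Rbar_le_antisym.
  - apply B2. intros r [x [Hx Hr]]. apply A1. exists x; split; auto.
  - apply A2. intros r [x [_ Hr]]. subst r.
    set (l := Glb_Rbar (fun r : R => exists x : M, eps_crit rho f eps x /\ r = f x - g x)) in *. clearbody l.
    destruct l as [l| |]; simpl; auto.
    + apply Rle_plus_epsilon. intros d Hd.
      destruct (K x d Hd) as [y [Hy Hy2]].
      specialize (B1 (f y - g y) (ex_intro _ y (conj Hy eq_refl))). simpl in B1. lra.
    + destruct (K x 1 Rlt_0_1) as [y [Hy _]].
      exact (B1 (f y - g y) (ex_intro _ y (conj Hy eq_refl))).
Qed.
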